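(* Let $q\ge2$ be fixed. There is a function $\varepsilon(n)\to0$ as $n\to\infty$ such that every $\mathcal{C}\subseteq\Sigma_q^n$ which is a $2$-read $(n,3)_q$-code, or which is a classical $(n,2;\mathcal{I}_1)_q$-reconstruction code, satisfies $r(\mathcal{C})\ge\log_q\log_q n-\varepsilon(n)$; i.e. $r(\mathcal{C})\ge\log_q\log_q n-o(1)$.
   Context: $\Sigma_q=\{0,\dots,q-1\}$. For $\boldsymbol{x}\in\Sigma_q^n$, $x[i]$ is its $i$-th entry, with $x[i]=0$ for $i\notin[1,n]$. $\mathcal{R}(\boldsymbol{x})$ is the vector of length $n+1$ whose $i$-th entry is the multiset $\{\{x[i-1],x[i]\}\}$. $\mathcal{C}\subseteq\Sigma_q^n$ is a $2$-read $(n,d)_q$-code if $d_H(\mathcal{R}(\boldsymbol{x}),\mathcal{R}(\boldsymbol{y}))\ge d$ for all distinct $\boldsymbol{x},\boldsymbol{y}\in\mathcal{C}$ ($d_H$ = Hamming distance). $\mathcal{I}_1(\boldsymbol{x})$ is the set of sequences of length $n+1$ obtained from $\boldsymbol{x}$ by inserting exactly one symbol of $\Sigma_q$; $\mathcal{C}$ is a classical $(n,2;\mathcal{I}_1)_q$-reconstruction code if $|\mathcal{I}_1(\boldsymbol{x})\cap\mathcal{I}_1(\boldsymbol{y})|\le1$ for all distinct $\boldsymbol{x},\boldsymbol{y}\in\mathcal{C}$. Redundancy: $r(\mathcal{C})=n-\log_q|\mathcal{C}|$. *)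

(* Defs.v *)
From mathcomp Require Import all_boot.
From Stdlib Require Import Reals.
Set Implicit Arguments.
Unset Strict Implicit.
Unset Printing Implicit Defensive.

(* x[i] for 1 <= i <= n, and 0 outside [1,n] (nth default 0 beyond n). *)
Definition entry (q n : nat) (x : n.-tuple 'I_q) (i : nat) : nat :=
  if i == 0 then 0 else nth 0 (map val x) i.-1.

(* A multiset {{a,b}} of two symbols, represented canonically as (min, max). *)
Definition mset2 (a b : nat) : nat * nat := (minn a b, maxn a b).

Definition read2 (q n : nat) (x : n.-tuple 'I_q) : seq (nat * nat) :=
  [seq mset2 (entry x i.-1) (entry x i) | i <- iota 1 n.+1].

Definition hamming (T : eqType) (s t : seq T) : nat :=
  count (fun p : T * T => p.1 != p.2) (zip s t).

Definition two_read_code (q n d : nat) (C : {set n.-tuple 'I_q}) : Prop :=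
  forall x y, x \in C -> y \in C -> x != y -> (d <= hamming (read2 x) (read2 y))%N.

Definition ins1 (q n : nat) (x : n.-tuple 'I_q) : {set n.+1.-tuple 'I_q} :=
  [set z : n.+1.-tuple 'I_q |
     [exists i : 'I_n.+1, exists a : 'I_q,
        val z == take i x ++ a :: drop i x]].

Definition recon_code (q n : nat) (C : {set n.-tuple 'I_q}) : Prop :=
  forall x y, x \in C -> y \in C -> x != y -> (#|ins1 x :&: ins1 y| <= 1)%N.

Definition logq (q : nat) (x : R) : R := (ln x / ln (INR q))%R.

Definition redundancy (q n : nat) (C : {set n.-tuple 'I_q}) : R :=
  (INR n - logq q (INR #|C|))%R.

(* Main.v *)
Require Import Defs.
From Stdlib Require Import Reals Lia Lra.
From mathcomp Require Import all_boot zify.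
Set Implicit Arguments.
Unset Strict Implicit.
Unset Printing Implicit Defensive.
Delimit Scope R_scope with R.

Definition sym (q : nat) (a b : 'I_q) (bit : bool) : 'I_q := if bit then b else a.

Lemma mset2C a b : mset2 a b = mset2 b a.
Proof. by rewrite /mset2 minnC maxnC. Qed.

Lemma zip_map2 (T U V : Type) (f : T -> U) (g : T -> V) s :
  zip (map f s) (map g s) = map (fun i => (f i, g i)) s.
Proof. by elim: s => //= x s ->. Qed.

Lemma count_or_iota (P : pred nat) u v s :
  (forall i, P i -> (i == u) || (i == v)) -> uniq s -> count P s <= 2.
Proof.
move=> H U.
apply: (@leq_trans (count (fun i => (i == u) || (i == v)) s)).
  apply: sub_count => i Hi; exact: H.
apply: (@leq_trans (count (pred1 u) s + count (pred1 v) s)).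
  rewrite -count_predUI; exact: leq_addr.
by rewrite -[2]/(1+1) leq_add // count_uniq_mem // leq_b1.
Qed.

Lemma conf_read (q n : nat) (a b : 'I_q) (x1 x2 : n.-tuple 'I_q) p k l :
  k < l -> p + l <= n ->
  (forall t, (t < p + k) || (p + l <= t) -> nth a x1 t = nth a x2 t) ->
  (forall t, p + k <= t < p + l ->
     nth a x1 t = sym a b (~~ odd (t - p)) /\ nth a x2 t = sym a b (odd (t - p))) ->
  hamming (read2 x1) (read2 x2) <= 2.
Proof.
move=> kl pln Hout Hin.
have ev_out : forall t, (t < p + k) || (p + l <= t) ->
   nth 0 (map val x1) t = nth 0 (map val x2) t.
  move=> t Ht; case: (ltnP t n) => tn.
    by rewrite (nth_map a) ?size_tuple // (nth_map a) ?size_tuple // Hout.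
  by rewrite !nth_default ?size_map ?size_tuple.
have ev_in : forall t, p + k <= t < p + l ->
   nth 0 (map val x1) t = sym a b (~~ odd (t - p)) /\
   nth 0 (map val x2) t = sym a b (odd (t - p)).
  move=> t Ht; have tn : t < n by lia.
  rewrite (nth_map a) ?size_tuple // (nth_map a) ?size_tuple //.
  by case: (Hin t Ht) => -> ->.
rewrite /hamming /read2 zip_map2 count_map.
apply: (@count_or_iota _ (p + k).+1 (p + l).+1); last exact: iota_uniq.
move=> i /=.
apply: contraR; rewrite negb_or => /andP [Hk Hl]; apply/eqP.
rewrite /entry.
case: i Hk Hl => // u Hk Hl /=.
have [uin|uout] := boolP ((p + k <= u) && (u < p + l)).
  case: u uin Hk Hl => [|u] uin Hk Hl.
    exfalso; move: uin Hk; lia.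
  have u1 : p + k <= u < p + l by move: uin Hk; rewrite !eqSS; lia.
  rewrite /=.
  case: (ev_in _ u1) => -> ->; case: (ev_in _ uin) => -> ->.
  have -> : u.+1 - p = (u - p).+1 by lia.
  by rewrite /= negbK mset2C.
have Ho : (u < p + k) || (p + l <= u) by move: uout; lia.
rewrite (ev_out _ Ho).
case: u uout Hk Hl Ho => [|u] uout Hk Hl Ho //=.
have Ho' : (u < p + k) || (p + l <= u) by move: uout Hl; rewrite !eqSS; lia.
by rewrite (ev_out _ Ho').
Qed.

Definition ins_seq (T : Type) (x : seq T) i (c : T) := take i x ++ c :: drop i x.

Lemma size_ins_seq (T : Type) (x : seq T) i c : size (ins_seq x i c) = (size x).+1.
Proof.
rewrite /ins_seq size_cat /= size_take size_drop.
case: (ltnP i (size x)) => h; try case: ifP; lia.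
Qed.

Lemma nth_ins_seq (T : Type) (d : T) (x : seq T) i c t : i <= size x ->
  nth d (ins_seq x i c) t =
  if t < i then nth d x t else if t == i then c else nth d x t.-1.
Proof.
move=> hi; rewrite /ins_seq nth_cat size_takel //.
case: (ltnP t i) => ti; first by rewrite nth_take.
case: eqP => [->|ne]; first by rewrite subnn.
have -> : t - i = (t - i).-1.+1 by lia.
rewrite /= nth_drop; congr nth; lia.
Qed.

Definition mk_ins (q n : nat) (x : n.-tuple 'I_q) (i : nat) (c : 'I_q) : n.+1.-tuple 'I_q :=
  Tuple (introT eqP (etrans (size_ins_seq x i c) (congr1 S (size_tuple x)))
     : size (ins_seq x i c) == n.+1).

Lemma mk_ins_mem (q n : nat) (x : n.-tuple 'I_q) i c : i <= n -> mk_ins x i c \in ins1 x.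
Proof.
move=> hi; rewrite inE; apply/existsP; exists (Ordinal (hi : i < n.+1)).
by apply/existsP; exists c.
Qed.

Lemma conf_ins (q n : nat) (a b : 'I_q) (hab : a != b) (x1 x2 : n.-tuple 'I_q) p k l :
  k < l -> p + l <= n ->
  (forall t, (t < p + k) || (p + l <= t) -> nth a x1 t = nth a x2 t) ->
  (forall t, p + k <= t < p + l ->
     nth a x1 t = sym a b (~~ odd (t - p)) /\ nth a x2 t = sym a b (odd (t - p))) ->
  2 <= #|ins1 x1 :&: ins1 x2|.
Proof.
move=> kl pln Hout Hin.
have sz1 : size x1 = n by rewrite size_tuple.
have sz2 : size x2 = n by rewrite size_tuple.
set z1 := mk_ins x1 (p + l) (sym a b (~~ odd l)).
set z2 := mk_ins x1 (p + k) (sym a b (odd k)).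
have E1 : z1 = mk_ins x2 (p + k) (sym a b (~~ odd k)).
  apply: val_inj => /=; apply: (@eq_from_nth _ a); first by rewrite !size_ins_seq sz1 sz2.
  move=> t _; rewrite !nth_ins_seq ?sz1 ?sz2; try lia.
  case: (ltnP t (p + k)) => tk.
    have -> : t < p + l by lia.
    by apply: Hout; rewrite tk.
  case: (eqVneq t (p + k)) => [->|tnk].
    case: (Hin (p + k)) => [|-> _]; first lia.
    rewrite (_ : p + k < p + l); last lia. by rewrite addKn.
  case: (ltnP t (p + l)) => tl.
    case: (Hin t) => [|-> _]; first lia.
    case: (Hin t.-1) => [|_ ->]; first lia.
    have -> : t - p = (t.-1 - p).+1 by lia.
    by rewrite /= negbK.
  case: (eqVneq t (p + l)) => [->|tnl].
    case: (Hin (p + l).-1) => [|_ ->]; first lia.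
    rewrite (_ : (p + l).-1 - p = l.-1); last lia.
    by case: (l) kl => //= l' _; rewrite negbK.
  by apply: Hout; apply/orP; right; lia.
have E2 : z2 = mk_ins x2 (p + l) (sym a b (odd l)).
  apply: val_inj => /=; apply: (@eq_from_nth _ a); first by rewrite !size_ins_seq sz1 sz2.
  move=> t _; rewrite !nth_ins_seq ?sz1 ?sz2; try lia.
  case: (ltnP t (p + k)) => tk.
    have -> : t < p + l by lia.
    by apply: Hout; rewrite tk.
  case: (eqVneq t (p + k)) => [->|tnk].
    case: (Hin (p + k)) => [|_ ->]; first lia.
    rewrite (_ : p + k < p + l); last lia. by rewrite addKn.
  case: (ltnP t (p + l)) => tl.
    case: (Hin t) => [|_ ->]; first lia.
    case: (Hin t.-1) => [|-> _]; first lia.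
    have -> : t - p = (t.-1 - p).+1 by lia.
    by [].
  case: (eqVneq t (p + l)) => [->|tnl].
    case: (Hin (p + l).-1) => [|-> _]; first lia.
    rewrite (_ : (p + l).-1 - p = l.-1); last lia.
    by case: (l) kl.
  by apply: Hout; apply/orP; right; lia.
have z12 : z1 != z2.
  apply/negP => /eqP /(congr1 (fun z : n.+1.-tuple 'I_q => nth a z (p + k))).
  rewrite E1 /= !nth_ins_seq ?sz1 ?sz2; try lia.
  rewrite ltnn eqxx /sym; case: (odd k) => /= h.
    by move/eqP: hab; rewrite h.
  by move/eqP: hab; rewrite h.
have -> : 2 = #|[set z1; z2]| by rewrite cards2 z12.
apply: subset_leq_card; apply/subsetP => z /set2P [] ->.
  rewrite in_setI; apply/andP; split; [| rewrite E1]; apply: mk_ins_mem; lia.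
rewrite in_setI; apply/andP; split; [| rewrite E2]; apply: mk_ins_mem; lia.
Qed.

Definition pat (q : nat) (a b : 'I_q) m k : seq 'I_q :=
  mkseq (fun i => sym a b (odd i == (i < k))) m.
Definition blk (q : nat) (a : 'I_q) m j (x : seq 'I_q) : seq 'I_q :=
  mkseq (fun i => nth a x (j * m + i)) m.
Definition repl (q : nat) (a : 'I_q) m j (s x : seq 'I_q) : seq 'I_q :=
  mkseq (fun i => if (j * m <= i) && (i < j * m + m) then nth a s (i - j * m)
                  else nth a x i) (size x).

Lemma size_repl q (a : 'I_q) m j s x : size (repl a m j s x) = size x.
Proof. by rewrite size_mkseq. Qed.

Lemma nth_repl q (a : 'I_q) m j s x t :
  nth a (repl a m j s x) t =
  if (j * m <= t) && (t < j * m + m) && (t < size x) then nth a s (t - j * m) else nth a x t.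
Proof.
case: (ltnP t (size x)) => ts.
  by rewrite nth_mkseq // andbT.
by rewrite andbF !nth_default ?size_repl.
Qed.

Definition repl_t q n (a : 'I_q) m j (s : seq 'I_q) (x : n.-tuple 'I_q) : n.-tuple 'I_q :=
  Tuple (introT eqP (etrans (size_repl a m j s x) (size_tuple x)) : size (repl a m j s x) == n).

Lemma sym_inj q (a b : 'I_q) : a != b -> injective (sym a b).
Proof. by move=> hab [] [] //= /eqP; rewrite ?(negbTE hab) // eq_sym (negbTE hab). Qed.

Lemma size_pat q (a b : 'I_q) m k : size (pat a b m k) = m.
Proof. by rewrite size_mkseq. Qed.

Lemma pat_inj q (a b : 'I_q) m k l : a != b -> k <= m -> l <= m ->
  pat a b m k = pat a b m l -> k = l.
Proof.
move=> hab km lm.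
wlog kl : k l km lm / k < l.
  move=> W E; case: (ltngtP k l) => // h; [exact: W | symmetry; exact: W].
move=> /(congr1 (fun s => nth a s k)); rewrite !nth_mkseq; try lia.
move/(sym_inj hab); rewrite ltnn kl; by case: (odd k).
Qed.

Lemma repl_conf q n (a b : 'I_q) m j k l (x : n.-tuple 'I_q) :
  k < l -> l <= m -> j * m + m <= n ->
  let x1 := repl_t a m j (pat a b m k) x in
  let x2 := repl_t a m j (pat a b m l) x in
  (forall t, (t < j * m + k) || (j * m + l <= t) -> nth a x1 t = nth a x2 t) /\
  (forall t, j * m + k <= t < j * m + l ->
     nth a x1 t = sym a b (~~ odd (t - j * m)) /\ nth a x2 t = sym a b (odd (t - j * m))).
Proof.
move=> kl lm jn /=; split.
  move=> t Ht; rewrite !nth_repl size_tuple.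
  case: ifP => // /andP [/andP [h1 h2] h3].
  have im : t - j * m < m by lia.
  rewrite !nth_mkseq //.
  congr sym; case/orP: Ht => h.
    have e1 : t - j * m < k by lia.
    have e2 : t - j * m < l by lia.
    by rewrite e1 e2.
  have e1 : (t - j * m < k) = false by apply/negbTE; rewrite -leqNgt; lia.
  have e2 : (t - j * m < l) = false by apply/negbTE; rewrite -leqNgt; lia.
  by rewrite e1 e2.
move=> t Ht; rewrite !nth_repl size_tuple.
have e0 : (j * m <= t) && (t < j * m + m) && (t < n) by lia.
rewrite e0.
have im : t - j * m < m by lia.
rewrite !nth_mkseq //.
have e1 : (t - j * m < k) = false by apply/negbTE; rewrite -leqNgt; lia.
have e2 : (t - j * m < l) by lia.
by rewrite e1 e2 eqbF_neg eqb_id.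
Qed.

Definition code q n (C : {set n.-tuple 'I_q}) := two_read_code 3 C \/ recon_code C.

Lemma conf_false q n (a b : 'I_q) (hab : a != b) (C : {set n.-tuple 'I_q}) m j k l
   (x : n.-tuple 'I_q) :
  code C -> k < l -> l <= m -> j * m + m <= n ->
  repl_t a m j (pat a b m k) x \in C -> repl_t a m j (pat a b m l) x \in C -> False.
Proof.
move=> HC kl lm jn H1 H2.
have [Hout Hin] := @repl_conf q n a b m j k l x kl lm jn.
have pln : j * m + l <= n by lia.
have ne : repl_t a m j (pat a b m k) x != repl_t a m j (pat a b m l) x.
  apply/negP => /eqP /(congr1 (fun z : n.-tuple 'I_q => nth a z (j * m + k))).
  case: (Hin (j * m + k)) => [|-> ->]; first lia.
  by move/(sym_inj hab); case: (odd _).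
case: HC => HC.
  have := HC _ _ H1 H2 ne.
  by rewrite leqNgt ltnS (conf_read kl pln Hout Hin).
have := HC _ _ H1 H2 ne.
by rewrite leqNgt (conf_ins hab kl pln Hout Hin).
Qed.

Lemma nth_blk q (a : 'I_q) m j x i : i < m -> nth a (blk a m j x) i = nth a x (j * m + i).
Proof. by move=> im; rewrite /blk nth_mkseq. Qed.

Lemma blk_repl_same q (a : 'I_q) m j s x : size s = m -> j * m + m <= size x ->
  blk a m j (repl a m j s x) = s.
Proof.
move=> ss jx; apply: (@eq_from_nth _ a); first by rewrite size_mkseq ss.
move=> i; rewrite size_mkseq => im; rewrite nth_blk // nth_repl.
have e : (j * m <= j * m + i) && (j * m + i < j * m + m) && (j * m + i < size x) by lia.
by rewrite e addKn.
Qed.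

Lemma blk_repl_other q (a : 'I_q) m j j' s x : j' < j ->
  blk a m j' (repl a m j s x) = blk a m j' x.
Proof.
move=> jj; apply: (@eq_from_nth _ a); first by rewrite !size_mkseq.
move=> i; rewrite size_mkseq => im; rewrite !nth_blk // nth_repl.
have e : (j * m <= j' * m + i) = false.
  apply/negbTE; rewrite -ltnNge.
  have : j'.+1 * m <= j * m by rewrite leq_mul2r jj orbT.
  rewrite mulSn.
  lia.
by rewrite e.
Qed.

Lemma repl_blk q (a : 'I_q) m j x : repl a m j (blk a m j x) x = x.
Proof.
apply: (@eq_from_nth _ a); first by rewrite size_repl.
move=> i; rewrite size_repl => ix; rewrite nth_repl.
case: ifP => // /andP [/andP [h1 h2] _].
rewrite nth_blk; last lia.
congr nth; lia.
Qed.

Lemma repl_repl q (a : 'I_q) m j s s' x : repl a m j s (repl a m j s' x) = repl a m j s x.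
Proof.
apply: (@eq_from_nth _ a); first by rewrite !size_repl.
move=> i; rewrite !size_repl => ix; rewrite !nth_repl !size_repl.
by case: ifP => // ->.
Qed.

Lemma find_prefix (T : Type) (x0 : T) (P P' : pred T) (s : seq T) :
  (forall i, i <= find P s -> i < size s -> P (nth x0 s i) = P' (nth x0 s i)) ->
  find P' s = find P s.
Proof.
elim: s => //= x s IH H.
have Hx := H 0 (leq0n _) (ltn0Sn _); rewrite /= in Hx.
rewrite -Hx; case Px: (P x) => //; congr S; apply: IH => i hi his.
by have := H i.+1; rewrite Px; apply.
Qed.

Definition goodb q (a b : 'I_q) m (s : seq 'I_q) := [exists k : 'I_m.+1, s == pat a b m k].
Definition fg q (a b : 'I_q) m N (x : seq 'I_q) :=
  find (fun j => goodb a b m (blk a m j x)) (iota 0 N).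

Lemma fg_good q (a b : 'I_q) m N x : fg a b m N x < N -> goodb a b m (blk a m (fg a b m N x) x).
Proof.
move=> h; have := nth_find 0 (_ : has (fun j => goodb a b m (blk a m j x)) (iota 0 N)).
rewrite nth_iota // add0n; apply; by rewrite has_find size_iota.
Qed.

Lemma fg_block q (a b : 'I_q) m N x : fg a b m N x < N -> N * m <= size x ->
  fg a b m N x * m + m <= size x.
Proof.
move=> h hN; apply: leq_trans hN; by rewrite addnC -mulSn leq_mul2r h orbT.
Qed.

Lemma fg_repl q (a b : 'I_q) m N x k : fg a b m N x < N -> k <= m -> N * m <= size x ->
  fg a b m N (repl a m (fg a b m N x) (pat a b m k) x) = fg a b m N x.
Proof.
move=> h km hN; apply: (@find_prefix nat 0 (fun j => goodb a b m (blk a m j x))) => i; rewrite size_iota => hi iN.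
rewrite nth_iota // add0n.
case: (ltngtP i (fg a b m N x)) => c.
- by rewrite blk_repl_other.
- rewrite /fg in c; lia.
- rewrite {1 2}c fg_good // (blk_repl_same).
  + by symmetry; apply/existsP; exists (Ordinal (km : k < m.+1)).
  + by rewrite size_pat.
  + exact: fg_block.
Qed.

Lemma good_count q n (a b : 'I_q) (hab : a != b) m N (C : {set n.-tuple 'I_q}) :
  code C -> N * m <= n ->
  #|[set x in C | fg a b m N x < N]| * m.+1 <= q ^ n.
Proof.
move=> HC hN.
set C' := [set x in C | fg a b m N x < N].
pose F := fun p : n.-tuple 'I_q * 'I_m.+1 =>
  repl_t a m (fg a b m N p.1) (pat a b m p.2) p.1.
have hN' : forall x : n.-tuple 'I_q, N * m <= size x by move=> x; rewrite size_tuple.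
have Finj : {in setX C' [set: 'I_m.+1] &, injective F}.
  move=> [x k] [y l]; rewrite !inE /= !andbT => /andP [xC xg] /andP [yC yg] E.
  have Ev : repl a m (fg a b m N x) (pat a b m k) x = repl a m (fg a b m N y) (pat a b m l) y.
    by have := congr1 val E.
  have ej : fg a b m N x = fg a b m N y.
    by rewrite -(fg_repl xg (ltn_ord k) (hN' x)) Ev (fg_repl yg (ltn_ord l) (hN' y)).
  set j := fg a b m N x in Ev ej.
  have jb : j * m + m <= n by rewrite -(size_tuple x); exact: fg_block.
  have ekl : k = l.
    apply: val_inj; apply: (@pat_inj q a b m k l hab (ltn_ord k) (ltn_ord l)).
    have := congr1 (blk a m j) Ev.
    rewrite blk_repl_same ?size_pat ?size_tuple // ej blk_repl_same ?size_pat ?size_tuple //.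
    by rewrite -ej.
  subst l.
  have /existsP [k1 /eqP Hx] := fg_good xg.
  have /existsP [l1 /eqP Hy] := fg_good yg.
  rewrite -/j in Hx; rewrite -ej -/j in Hy.
  have Ey : tval y = repl a m j (pat a b m l1) x.
    rewrite -ej in Ev.
    by rewrite -{1}(repl_blk a m j y) Hy -(repl_repl a m j (pat a b m l1) (pat a b m k) y) -Ev repl_repl.
  have Ex : tval x = repl a m j (pat a b m k1) x by rewrite -Hx repl_blk.
  have Ey' : y = repl_t a m j (pat a b m l1) x by apply: val_inj; rewrite /= -Ey.
  have Ex' : x = repl_t a m j (pat a b m k1) x by apply: val_inj; rewrite /= -Ex.
  case: (ltngtP k1 l1) => c.
  - exfalso; apply: (@conf_false q n a b hab C m j k1 l1 x HC c (ltn_ord l1) jb); [by rewrite -Ex'|by rewrite -Ey'].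
  - exfalso; apply: (@conf_false q n a b hab C m j l1 k1 x HC c (ltn_ord k1) jb); [by rewrite -Ey'|by rewrite -Ex'].
  - suff -> : y = x by [].
    by apply: val_inj => /=; rewrite Ey -c -Ex.
have := card_in_imset Finj; rewrite cardsX cardsT card_ord => <-.
apply: leq_trans (max_card _) _.
by rewrite card_tuple card_ord.
Qed.

Definition pat_t q (a b : 'I_q) m k : m.-tuple 'I_q :=
  Tuple (introT eqP (size_pat a b m k) : size (pat a b m k) == m).
Definition blk_t q n (a : 'I_q) m j (x : n.-tuple 'I_q) : m.-tuple 'I_q :=
  Tuple (introT eqP (size_mkseq (fun i => nth a x (j * m + i)) m) : size (blk a m j x) == m).

Definition pato q (a b : 'I_q) m (k : 'I_m.+1) := pat_t a b m k.
Arguments pato {q} a b m k.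
Definition pats q (a b : 'I_q) m := pato a b m @: [set: 'I_m.+1].

Lemma card_pats q (a b : 'I_q) (hab : a != b) m :
  #|~: pats a b m| + m.+1 = q ^ m.
Proof.
have inj : injective (pato a b m).
  move=> k l /(congr1 val) /= E; apply: val_inj.
  exact: (@pat_inj q a b m k l hab (ltn_ord k) (ltn_ord l)).
have := cardsC (pats a b m).
rewrite {1}/pats (card_imset _ inj) cardsT card_ord card_tuple card_ord.
by move=> <-; rewrite addnC.
Qed.

Lemma goodb_pats q (a b : 'I_q) m (s : m.-tuple 'I_q) : goodb a b m s = (s \in pats a b m).
Proof.
apply/existsP/imsetP => [[k /eqP E]|[k _ ->]].
  by exists k => //; apply: val_inj.
by exists k.
Qed.

Lemma bad_blocks q (a b : 'I_q) m N (x : seq 'I_q) j : ~~ (fg a b m N x < N) -> j < N ->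
  ~~ goodb a b m (blk a m j x).
Proof.
move=> h jN.
have := @before_find _ 0 (fun j => goodb a b m (blk a m j x)) (iota 0 N) j.
rewrite nth_iota // add0n => H; apply/negbT/H.
move: h; rewrite /fg; lia.
Qed.

Lemma bad_count q n (a b : 'I_q) m N : N * m <= n ->
  #|[set x : n.-tuple 'I_q | ~~ (fg a b m N x < N)]| <=
  #|~: pats a b m| ^ N * q ^ (n - N * m).
Proof.
move=> hN.
pose G := fun x : n.-tuple 'I_q =>
  ([ffun j : 'I_N => blk_t a m j x], drop_tuple (N * m) x).
have Ginj : injective G.
  move=> x y [] /ffunP Eb Ed.
  apply: val_inj; apply: (@eq_from_nth _ a); first by rewrite !size_tuple.
  move=> t; rewrite size_tuple => tn.
  case: (ltnP t (N * m)) => tN.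
    have m0 : 0 < m by case: (m) tN => //; rewrite muln0.
    have jN : t %/ m < N by rewrite ltn_divLR.
    have rm : t %% m < m by rewrite ltn_mod.
    have := congr1 (fun s : m.-tuple 'I_q => nth a s (t %% m)) (Eb (Ordinal jN)).
    rewrite !ffunE /= !nth_blk //.
    by rewrite -divn_eq.
  have := congr1 (fun s => nth a s (t - N * m)) Ed.
  by rewrite /= !nth_drop subnKC.
rewrite -(card_imset _ Ginj).
apply: (@leq_trans #|setX [set f : {ffun 'I_N -> m.-tuple 'I_q} | f \in ffun_on (~: pats a b m)]
                         [set: (n - N * m).-tuple 'I_q]|).
  apply: subset_leq_card; apply/subsetP => z /imsetP [x]; rewrite inE => hx ->.
  rewrite !inE andbT; apply/ffun_onP => j; rewrite ffunE inE -goodb_pats.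
  exact: (bad_blocks hx (ltn_ord j)).
rewrite cardsX cardsT card_tuple card_ord cardsE card_ffun_on card_ord.
by [].
Qed.

Lemma bernoulli_nat c g N : c ^ N * (c + g + N * g) <= (c + g) ^ N.+1.
Proof.
elim: N => [|N IH]; first by rewrite expn0 mul1n mul0n addn0 expn1.
rewrite expnS (expnS (c + g) N.+1).
apply: (@leq_trans ((c + g) * (c ^ N * (c + g + N * g)))); last by rewrite leq_mul2l IH orbT.
rewrite [c * c ^ N]mulnC -mulnA [(c + g) * (c ^ N * _)]mulnCA leq_mul2l; apply/orP; right.
nia.
Qed.

Lemma main_nat q n (hq : 1 < q) m (C : {set n.-tuple 'I_q}) : code C ->
  #|C| * m.+1 * (q ^ m + n %/ m * m.+1) <=
  q ^ n * (q ^ m + n %/ m * m.+1) + q ^ n * q ^ m * m.+1.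
Proof.
move=> HC.
set N := n %/ m.
have hN : N * m <= n by exact: leq_divM.
pose a : 'I_q := Ordinal (ltnW hq). pose b : 'I_q := Ordinal hq.
have hab : a != b by [].
set C' := [set x in C | fg a b m N x < N].
set B := [set x : n.-tuple 'I_q | ~~ (fg a b m N x < N)].
have h1 : #|C| <= #|C'| + #|B|.
  apply: (@leq_trans #|C' :|: B|); last exact: leq_card_setU.
  apply: subset_leq_card; apply/subsetP => x xC; rewrite !inE xC /=.
  by case: (fg a b m N x < N).
have h2 := good_count hab HC hN.
have h3 := bad_count a b hN.
have h4 := card_pats hab m.
set c := #|~: pats a b m| in h3 h4.
have h5 := bernoulli_nat c m.+1 N.
rewrite h4 in h5.
have h6 : #|B| * (q ^ m + N * m.+1) <= q ^ n * q ^ m.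
  have e1 : q ^ n = (q ^ m) ^ N * q ^ (n - N * m) by rewrite -expnM -expnD (mulnC m N) subnKC.
  have e2 : (q ^ m) ^ N.+1 = q ^ m * (q ^ m) ^ N by rewrite expnS.
  rewrite e2 -h4 in h5.
  rewrite -h4 in e1 |- *.
  set Y := c + m.+1 in h5 e1 |- *.
  set R := q ^ (n - N * m) in h3 e1.
  apply: (@leq_trans (c ^ N * R * (Y + N * m.+1))).
    by rewrite leq_mul2r h3 orbT.
  rewrite mulnAC e1 [Y ^ N * R * Y]mulnAC [Y ^ N * Y]mulnC leq_mul2r h5 orbT //.

set D := q ^ m + N * m.+1 in h6 |- *.
apply: (@leq_trans ((#|C'| + #|B|) * m.+1 * D)); first by rewrite !leq_mul2r h1 !orbT.
rewrite mulnDl mulnDl leq_add //; first by rewrite leq_mul2r h2 orbT.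
by rewrite mulnAC leq_mul2r h6 orbT.
Qed.

Definition Lf q n := trunc_log q n.
Definition tf q n := 2 * trunc_log 2 (Lf q n).+1 + 2.
Definition mf q n := Lf q n - tf q n.

Lemma sq_pow s : 6 <= s -> (s + 1) * (s + 1) <= 2 ^ s.
Proof.
elim: s => // s IH; rewrite leq_eqVlt => /orP [/eqP <- //|h].
have := IH h; rewrite expnS; set X := 2 ^ s; nia.
Qed.

Lemma dom c s : c + 6 <= s -> c * (s + 1) <= 2 ^ s.
Proof.
move=> h; apply: leq_trans (sq_pow (_ : 6 <= s)); last lia.
rewrite leq_mul2r; lia.
Qed.

Lemma ar1 K s t X L : t = 2 * s + 2 -> (2 * K + 2) * (s + 1) <= X -> X <= L.+1 ->
  K.+1 * t <= L.+1.
Proof.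
move=> -> h1 h2; apply: leq_trans h2; apply: leq_trans h1.
by rewrite !mulnDr !mulnDl !mulSn; lia.
Qed.

Lemma ar2 K t L : 0 < K -> K.+1 * t <= L.+1 -> 2 * t <= L.+1.
Proof. move=> hK h; apply: leq_trans h; rewrite leq_mul2r; lia. Qed.

Lemma ar3 K t L : K.+1 * t <= L.+1 -> t <= L -> K * L.+1 <= K.+1 * (L - t).+1.
Proof.
move=> h tL.
have -> : (L - t).+1 = L.+1 - t by lia.
rewrite mulnBr; move: h; set a := K.+1 * t; rewrite mulSn; lia.
Qed.

Lemma ar4 K L A B N m n : K * L.+1 < B -> A * B <= n -> n < N.+1 * m -> m < A ->
  K * L.+1 * A <= A + N * m.+1.
Proof.
move=> h1 h2 h3 h4.
have h5 : A * (K * L.+1).+1 <= A * B by rewrite leq_mul2l h1 orbT.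
have h6 : N * m <= N * m.+1 by rewrite leq_mul2l; lia.
move: h3; rewrite mulSn => h3.
rewrite mulnC; move: h5; rewrite mulnS; set X := A * (K * L.+1); lia.
Qed.

Lemma nat_event q (hq : 1 < q) K (hK : 0 < K) : exists n0, forall n, n0 <= n ->
  [/\ 2 <= n, 0 < mf q n, K * (Lf q n).+1 <= K.+1 * (mf q n).+1 &
      K * (Lf q n).+1 * q ^ mf q n <= q ^ mf q n + n %/ mf q n * (mf q n).+1].
Proof.
set S0 := (2 * K + 2) + 6.
set L0 := 2 ^ S0 + K + 2.
exists (q ^ L0) => n hn.
have LL : L0 <= Lf q n by apply: trunc_log_max.
have hqL : q ^ Lf q n <= n by apply: trunc_logP => //; apply: (leq_trans _ hn); rewrite expn_gt0; lia.
set L := Lf q n in LL hqL *.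
have qL : 2 ^ L <= q ^ L by rewrite leq_exp2r; lia.
have L2 : 2 <= L by lia.
have n2 : 2 <= n.
  have := ltn_expl L (isT : 1 < 2); lia.
set s := trunc_log 2 L.+1.
have sS : S0 <= s by apply: trunc_log_max => //; lia.
have s1 : 2 ^ s <= L.+1 by apply: trunc_logP.
have s2 : L.+1 < 2 ^ s.+1 by apply: trunc_log_ltn.
have dS := dom sS.
have tdef : tf q n = 2 * s + 2 by [].
set t := tf q n in tdef.
have Kt : K.+1 * t <= L.+1 by apply: ar1 tdef dS s1.
have t2 : 2 * t <= L.+1 by apply: ar2 hK Kt.
have tL : t <= L by lia.
have mdef : mf q n = L - t by [].
set m := mf q n in mdef *.
have m0 : 0 < m by lia.
split => //.
  by rewrite mdef; apply: ar3.
have h2t : 2 ^ t = 2 ^ s.+1 * 2 ^ s.+1 by rewrite -expnD; congr expn; lia.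
have qt : 2 ^ t <= q ^ t by rewrite leq_exp2r; lia.
have KL : K * L.+1 < q ^ t.
  apply: (@leq_trans (2 ^ t)) => //; rewrite h2t.
  apply: (@leq_ltn_trans (L.+1 * L.+1)); first by rewrite leq_mul2r; lia.
  by apply: ltn_mul.
have qLmt : q ^ L = q ^ m * q ^ t by rewrite -expnD; congr expn; lia.
have Nm : n < (n %/ m).+1 * m by apply: ltn_ceil.
have mq : m < q ^ m by apply: ltn_expl.
apply: ar4 KL _ Nm mq.
by rewrite -qLmt.
Qed.

Lemma INR_expn q n : INR (q ^ n) = (INR q ^ n)%R.
Proof.
elim: n => [|n IH]; first by rewrite expn0.
by rewrite expnS mult_INR IH.
Qed.

Lemma ln0 : ln 0 = 0%R.
Proof. rewrite /ln; case: Rlt_dec => [h|_]; [exfalso; lra | by []]. Qed.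

Lemma ln_le x y : (0 < x)%R -> (x <= y)%R -> (ln x <= ln y)%R.
Proof.
move=> hx [h|->]; last lra.
by apply: Rlt_le; apply: ln_increasing.
Qed.

Lemma lnq_pos q : 1 < q -> (0 < ln (INR q))%R.
Proof.
move=> hq; rewrite -ln_1; apply: ln_increasing; first lra.
have : (INR 1 < INR q)%R by apply: lt_INR; apply/ltP.
by rewrite /=.
Qed.

Definition beta (q n m : nat) : R :=
  (/ INR m.+1 + INR (q ^ m) / INR (q ^ m + n %/ m * m.+1))%R.

Lemma card_bound q n (hq : 1 < q) m (C : {set n.-tuple 'I_q}) : code C ->
  (INR #|C| <= INR (q ^ n) * beta q n m)%R.
Proof.
move=> HC.
have H := main_nat hq m HC.
move/leP/le_INR: H; rewrite !plus_INR !mult_INR.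
set c := INR #|C|; set M := INR m.+1; set Q := INR (q ^ n); set A := INR (q ^ m).
rewrite plus_INR mult_INR -/A -/M.
set N := INR (n %/ m) => H.
have M0 : (0 < M)%R by apply: lt_0_INR; apply/ltP.
have A0 : (0 < A)%R by apply: lt_0_INR; apply/ltP; rewrite expn_gt0; lia.
have N0 : (0 <= N)%R by apply: pos_INR.
have D0 : (0 < A + N * M)%R by nra.
rewrite /beta plus_INR mult_INR -/A -/M -/N.
apply: (Rmult_le_reg_r (M * (A + N * M))); first nra.
have -> : (Q * (/ M + A / (A + N * M)) * (M * (A + N * M)) = Q * (A + N * M) + Q * A * M)%R.
  field; lra.
lra.
Qed.

Definition Bn q n := Rmax 1 (INR (q ^ n) * beta q n (mf q n)).
Definition epsf q n := Rmax 0 (logq q (logq q (INR n)) - INR n + logq q (Bn q n)).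

Lemma ineq_part q (hq : 1 < q) n (C : {set n.-tuple 'I_q}) : code C ->
  (logq q (logq q (INR n)) - epsf q n <= redundancy C)%R.
Proof.
move=> HC.
have hb := card_bound hq (mf q n) HC.
have lq := lnq_pos hq.
have key : (logq q (INR #|C|) <= logq q (Bn q n))%R.
  rewrite /logq /Rdiv; apply: Rmult_le_compat_r; first exact: (Rlt_le _ _ (Rinv_0_lt_compat _ lq)).
  have B1 : (1 <= Bn q n)%R by apply: Rmax_l.
  case: (eqVneq #|C| 0) => [->|c0].
    rewrite /= ln0 -ln_1; apply: ln_le; lra.
  apply: ln_le; first by apply: lt_0_INR; apply/ltP; lia.
  apply: Rle_trans hb _; exact: Rmax_r.
rewrite /redundancy /epsf.
have := Rmax_r 0 (logq q (logq q (INR n)) - INR n + logq q (Bn q n)).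
lra.
Qed.

Lemma ln_le_exp x : (0 < 1 + x)%R -> (ln (1 + x) <= x)%R.
Proof.
move=> h; rewrite -{2}(ln_exp x); apply: ln_le => //; exact: exp_ineq1_le.
Qed.

Lemma cv_part q (hq : 1 < q) : Un_cv (epsf q) 0.
Proof.
move=> d d0.
have lq := lnq_pos hq.
have [K [hK K0]] := archimed_cor1 (d * ln (INR q) / 2) ltac:(nra).
have K0' : 0 < K by apply/ltP.
have [n0 Hn0] := nat_event hq K0'.
exists n0 => n hn.
have [n2 m0 i1 i2] := Hn0 n (introT leP hn).
rewrite /R_dist Rminus_0_r Rabs_right; last first.
  by apply: Rle_ge; apply: Rmax_l.
apply: Rmax_lub_lt => //.
set L := Lf q n in i1 i2.
set m := mf q n in i1 i2 m0 *.
set N := n %/ m in i2 *.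
have nL : n < q ^ L.+1 by apply: trunc_log_ltn.
have mq : m.+1 <= q ^ n.
  have : m <= L by rewrite /m /mf; lia.
  have : q ^ L <= n by apply: trunc_logP => //; lia.
  have := ltn_expl L hq; have := ltn_expl n hq; lia.
move/leP/le_INR: i1; rewrite !mult_INR => f1.
move/leP/le_INR: i2; rewrite !plus_INR !mult_INR => f2.
move/leP/le_INR: mq => f3.
move/ltP/lt_INR: nL; rewrite INR_expn => f4.
have Kp : (0 < INR K)%R by apply: lt_0_INR; apply/ltP.
set Kr := INR K in f1 f2 Kp hK.
set Lr := INR L.+1 in f1 f2.
set M := INR m.+1 in f1 f2 f3.
set A := INR (q ^ m) in f2.
set Nr := INR N in f2.
set Q := INR (q ^ n) in f3.
set qr := INR q in f4 lq hK.
have M0 : (0 < M)%R by apply: lt_0_INR; apply/ltP.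
have A0 : (0 < A)%R by apply: lt_0_INR; apply/ltP; rewrite expn_gt0; lia.
have N0 : (0 <= Nr)%R by apply: pos_INR.
have D0 : (0 < A + Nr * M)%R by nra.
have qpos : (0 < qr)%R by rewrite /qr; apply: lt_0_INR; apply/ltP; lia.
have Qpos : (0 < Q)%R by lra.
have Kr1 : (INR K.+1 = Kr + 1)%R by rewrite S_INR.
rewrite Kr1 in f1.
have n1 : (1 < INR n)%R.
  have : (INR 1 < INR n)%R by apply: lt_INR; apply/ltP.
  by rewrite /=.
have lnn0 : (0 < ln (INR n))%R by rewrite -ln_1; apply: ln_increasing; lra.
have lnnL : (ln (INR n) < Lr * ln qr)%R.
  rewrite /Lr -ln_pow //; apply: ln_increasing => //; lra.
set ln_n := ln (INR n) in lnn0 lnnL.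
set lq_ := ln qr in lq lnnL hK.
have bdef : beta q n m = (/ M + A / (A + Nr * M))%R.
  by rewrite /beta plus_INR mult_INR.
set b := beta q n m in bdef.
have b0 : (/ M <= b)%R.
  rewrite bdef; have : (0 <= A / (A + Nr * M))%R by apply: Rlt_le; apply: Rdiv_lt_0_compat; lra.
  lra.
have Minv : (0 < / M)%R by apply: Rinv_0_lt_compat.
have bpos : (0 < b)%R by lra.
have Qb1 : (1 <= Q * b)%R.
  apply: (Rle_trans _ (Q * / M)); last by apply: Rmult_le_compat_l; lra.
  rewrite -(Rinv_r M); last lra.
  by apply: Rmult_le_compat_r; lra.
have Bdef : Bn q n = (Q * b)%R by rewrite /Bn Rmax_right.
have t1 : (Lr / M <= 1 + / Kr)%R.
  apply: (Rmult_le_reg_r (Kr * M)); first nra.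
  have -> : (Lr / M * (Kr * M) = Kr * Lr)%R by field; lra.
  have -> : ((1 + / Kr) * (Kr * M) = (Kr + 1) * M)%R by field; lra.
  lra.
have t2 : (Lr * (A / (A + Nr * M)) <= / Kr)%R.
  apply: (Rmult_le_reg_r (Kr * (A + Nr * M))); first nra.
  have -> : (Lr * (A / (A + Nr * M)) * (Kr * (A + Nr * M)) = Kr * Lr * A)%R by field; lra.
  have -> : (/ Kr * (Kr * (A + Nr * M)) = A + Nr * M)%R by field; lra.
  lra.
have Lb : (Lr * b <= 1 + 2 * / Kr)%R by rewrite bdef; rewrite Rmult_plus_distr_l; lra.
have rho0 : (0 < ln_n / lq_ * b)%R.
  apply: Rmult_lt_0_compat => //; apply: Rdiv_lt_0_compat => //.
have rhoL : (ln_n / lq_ * b <= 1 + 2 * / Kr)%R.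
  apply: Rle_trans Lb; apply: Rmult_le_compat_r; first lra.
  apply: (Rmult_le_reg_r lq_) => //.
  have -> : (ln_n / lq_ * lq_ = ln_n)%R by field; lra.
  lra.
have lrho : (ln (ln_n / lq_ * b) <= 2 * / Kr)%R.
  have iK : (0 < / Kr)%R by apply: Rinv_0_lt_compat.
  have hx : (0 < 1 + 2 * / Kr)%R by lra.
  apply: (Rle_trans _ (ln (1 + 2 * / Kr))); [by apply: ln_le | exact: ln_le_exp].
have lnQ : ln Q = (INR n * lq_)%R by rewrite /Q INR_expn ln_pow.
rewrite Bdef /logq.
rewrite ln_mult // lnQ.
have -> : (ln (ln_n / lq_) / lq_ - INR n + (INR n * lq_ + ln b) / lq_
          = (ln (ln_n / lq_) + ln b) / lq_)%R by field; lra.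
rewrite -ln_mult //; last by apply: Rdiv_lt_0_compat.
apply: (Rle_lt_trans _ (2 * / Kr / lq_)).
  by apply: Rmult_le_compat_r; [apply: Rlt_le; apply: Rinv_0_lt_compat|].
apply: (Rmult_lt_reg_r lq_) => //.
have -> : (2 * / Kr / lq_ * lq_ = 2 * / Kr)%R by field; lra.
lra.
Qed.


Theorem theorem5 (q : nat) (hq : (2 <= q)%N) :
  exists eps : nat -> R, Un_cv eps 0%R /\
    forall (n : nat) (C : {set n.-tuple 'I_q}),
      two_read_code 3 C \/ recon_code C ->
      (logq q (logq q (INR n)) - eps n <= redundancy C)%R.
Proof.
exists (epsf q); split; first exact: cv_part.
move=> n C HC; exact: ineq_part.
Qed.
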